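(* For each $h\in\{1,2\}$, let $\mathrm{bd}_h\in\mathbb{BD}^{\mathbb{Z}}_n$ be a non-empty integer BD shape represented by the closed integer graph $G_h=(\mathcal{N},w_h)$, and let $R_h$ be a subgraph of $G_h$ such that $\mathrm{closure}(R_h)=G_h$. Let $G_1\sqcup G_2=(\mathcal{N},w)$. Then $\mathrm{bd}_1\uplus\mathrm{bd}_2\neq\mathrm{bd}_1\cup\mathrm{bd}_2$ if and only if there exist an arc $(i,j)$ of $R_1$ and an arc $(k,\ell)$ of $R_2$ such that (1) $w_1(i,j)<w_2(i,j)$ and $w_2(k,\ell)<w_1(k,\ell)$; and (2) $w_1(i,j)+w_2(k,\ell)+2\le w(i,\ell)+w(k,j)$.
   Context: Let $\mathcal{N}=\{0,1,\dots,n\}$. An integer graph is a pair $(\mathcal{N},w)$ with $w:\mathcal{N}\times\mathcal{N}\to\mathbb{Z}\cup\{+\infty\}$ (with $d<+\infty$, $d+(+\infty)=+\infty$); $(i,j)$ is an arc if $w(i,j)<+\infty$. A path $n_0\cdots n_p$ has weight $\sum_t w(n_{t-1},n_t)$; the graph is consistent if no cycle has negative weight. Graphs are ordered by $G\unlhd G'$ iff $w\le w'$ pointwise. A consistent graph is closed if $w(i,i)=0$ and $w(i,j)\le w(i,k)+w(k,j)$ for all $i,j,k$. $\mathrm{closure}(G)$ is the pointwise maximum of all closed graphs $G^c\unlhd G$. $R$ is a subgraph of $G$ if every arc of $R$ is an arc of $G$ with the same weight. An integer BD shape is a set $\{\mathbf{x}\in\mathbb{Z}^n : \text{finitely many constraints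 } \pm x_i\le b,\ x_i-x_j\le b\}$ with $b\in\mathbb{Z}$; $\mathbb{BD}^{\mathbb{Z}}_n$ is the set of them. A consistent integer graph $G=(\mathcal{N},w)$ represents $\{\mathbf{x}\in\mathbb{Z}^n : x_i-x_j\le w(i,j)\ \forall i,j\in\mathcal{N}\}$ with $x_0:=0$. $G_1\sqcup G_2=(\mathcal{N},w)$ with $w(i,j)=\max(w_1(i,j),w_2(i,j))$. $\mathrm{bd}_1\uplus\mathrm{bd}_2$ is the least integer BD shape containing $\mathrm{bd}_1\cup\mathrm{bd}_2$, represented by $G_1\sqcup G_2$. *)

(* Defs.v *)
From mathcomp Require Import all_boot all_order all_algebra.
Set Implicit Arguments. Unset Strict Implicit. Unset Printing Implicit Defensive.
Import Order.TTheory GRing.Theory Num.Theory.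
Local Open Scope ring_scope.

Inductive ext := Fin of int | PInf.

Definition add_w (a b : ext) : ext :=
  match a, b with Fin x, Fin y => Fin (x + y) | _, _ => PInf end.
Definition le_w (a b : ext) : bool :=
  match a, b with
  | Fin x, Fin y => x <= y
  | _, PInf => true
  | PInf, Fin _ => false end.
Definition lt_w (a b : ext) : bool :=
  match a, b with
  | Fin x, Fin y => x < y
  | Fin _, PInf => true
  | PInf, _ => false end.
Definition max_w (a b : ext) : ext :=
  match a, b with Fin x, Fin y => Fin (Num.max x y) | _, _ => PInf end.

Definition node n := 'I_n.+1.
(* An integer graph (N, w) is identified with its weight function w. *)
Definition graph n := node n -> node n -> ext.

Definition is_arc n (G : graph n) (i j : node n) : Prop := G i j <> PInf.

Fixpoint pathw n (G : graph n) (x : node n) (s : seq (node n)) : ext :=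
  match s with
  | [::] => Fin 0
  | y :: s' => add_w (G x y) (pathw G y s')
  end.

Definition consistent n (G : graph n) : Prop :=
  forall (x : node n) (s : seq (node n)), s <> [::] -> last x s = x ->
    ~~ lt_w (pathw G x s) (Fin 0).

Definition graph_le n (G G' : graph n) : Prop := forall i j, le_w (G i j) (G' i j).

Definition closed_graph n (G : graph n) : Prop :=
  [/\ consistent G, (forall i, G i i = Fin 0) &
      (forall i j k, le_w (G i j) (add_w (G i k) (G k j)))].

Definition is_closure n (G C : graph n) : Prop :=
  forall i j,
    (exists Gc : graph n, [/\ closed_graph Gc, graph_le Gc G & Gc i j = C i j]) /\
    (forall Gc : graph n, closed_graph Gc -> graph_le Gc G -> le_w (Gc i j) (C i j)).

Definition subgraph n (R G : graph n) : Prop :=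
  forall i j, R i j <> PInf -> R i j = G i j.

(* points of Z^n, extended with x_0 := 0 *)
Definition xval n (x : 'I_n -> int) (i : node n) : int :=
  match unlift ord0 i with Some j => x j | None => 0 end.

Definition gamma n (G : graph n) (x : 'I_n -> int) : Prop :=
  forall i j, le_w (Fin (xval x i - xval x j)) (G i j).

Inductive bd_cstr n :=
  | CUp of 'I_n & int
  | CLo of 'I_n & int
  | CDiff of 'I_n & 'I_n & int.

Definition sat_cstr n (c : bd_cstr n) (x : 'I_n -> int) : Prop :=
  match c with
  | CUp i b => x i <= b
  | CLo i b => - x i <= b
  | CDiff i j b => x i - x j <= b
  end.

Fixpoint sat_all n (cs : seq (bd_cstr n)) (x : 'I_n -> int) : Prop :=
  match cs with [::] => True | c :: cs' => sat_cstr c x /\ sat_all cs' x end.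

Definition is_BD n (S : ('I_n -> int) -> Prop) : Prop :=
  exists cs : seq (bd_cstr n), forall x, S x <-> sat_all cs x.

Definition bd_uplus n (S1 S2 : ('I_n -> int) -> Prop) (x : 'I_n -> int) : Prop :=
  forall B, is_BD B -> (forall y, S1 y \/ S2 y -> B y) -> B x.

Definition set_eq n (S T : ('I_n -> int) -> Prop) : Prop := forall x, S x <-> T x.

Definition gjoin n (G1 G2 : graph n) : graph n := fun i j => max_w (G1 i j) (G2 i j).

(* Main.v *)
Require Import Defs.
From mathcomp Require Import all_boot all_order all_algebra.
Import Order.TTheory GRing.Theory Num.Theory.
Local Open Scope ring_scope.
From mathcomp Require Import zify.
From Stdlib Require Import Classical.
Set Implicit Arguments. Unset Strict Implicit.

Section Aux.
Variable n : nat.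
Implicit Types (C G R : graph n).

Definition solC C (g : node n -> int) : Prop :=
  forall u v c, C u v = Fin c -> g u - g v <= c.

Lemma gamma_solC C y : gamma C y <-> solC C (xval y).
Proof.
split.
- by move=> H u v c E; have := H u v; rewrite E.
- move=> H u v; case E: (C u v) => [c|] //=; exact: H.
Qed.

Lemma solC_point C f : solC C f ->
  exists y, gamma C y /\ forall v, xval y v = f v - f ord0.
Proof.
move=> S.
have X : forall v, xval (fun t => f (lift ord0 t) - f ord0) v = f v - f ord0.
  by move=> v; rewrite /xval; case: (unliftP ord0 v) => [t|] ->; rewrite ?subrr.
exists (fun t => f (lift ord0 t) - f ord0); split => //.
apply/gamma_solC => u v c E; rewrite !X; have := S u v c E; lia.
Qed.

Definition cmin (e : ext) (z : int) : int :=
  match e with Fin a => if a <= z then a else z | PInf => z end.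

Lemma cmin_le_z e z : cmin e z <= z.
Proof. by case: e => [a|] /=; [case: ifP; lia | lia]. Qed.

Lemma cmin_le_a e z a : e = Fin a -> cmin e z <= a.
Proof. by move=> -> /=; case: ifP; lia. Qed.

Lemma cmin_ge e z m : m <= z -> (forall a, e = Fin a -> m <= a) -> m <= cmin e z.
Proof. case: e => [a|] /= H1 H2 //; have := H2 a erefl; case: ifP; lia. Qed.

Definition tri C := forall i j k, le_w (C i j) (add_w (C i k) (C k j)).

Lemma cone_sol C g t d : tri C -> solC C g ->
  solC C (fun v => cmin (add_w (C v t) (Fin d)) (g v)).
Proof.
move=> T S u v c Euv /=.
have Sg := S u v c Euv.
case Evt: (C v t) => [a2|] /=.
- have := T u t v; rewrite Euv Evt.
  case Eut: (C u t) => [a1|] //= Ha1.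
  by do 2 case: ifP; lia.
- have := cmin_le_z (add_w (C u t) (Fin d)) (g u); lia.
Qed.

Lemma solC_add C g M : solC C g -> solC C (fun v => g v + M).
Proof. move=> S u v c E; have := S u v c E; lia. Qed.

Lemma tight C s t b : tri C -> (forall i, C i i = Fin 0) -> (exists p, gamma C p) ->
  (forall y, gamma C y -> xval y s - xval y t <= b) -> le_w (C s t) (Fin b).
Proof.
move=> T D [p Hp] H.
have SP : solC C (xval p) by rewrite -gamma_solC.
pose M := match C s t with Fin a => a - xval p s | PInf => b + 1 - xval p s end.
have Sh := @cone_sol C _ t 0 T (solC_add M SP).
have [y [Hy Ey]] := solC_point Sh.
have := H y Hy; rewrite !Ey.
have ht : cmin (add_w (C t t) (Fin 0)) (xval p t + M) <= 0.
  by apply: cmin_le_a; rewrite D /= addr0.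
move: ht.
set hs := cmin (add_w (C s t) _) _.
set h0 := cmin (add_w (C ord0 t) _) _.
set htt := cmin (add_w (C t t) _) _.
move=> ht Hb.
case E: (C s t) => [a|] /=.
- have : a <= hs.
    apply: cmin_ge; first by rewrite /M E; lia.
    by rewrite E /= => a' [<-]; lia.
  lia.
- have : b + 1 <= hs.
    apply: cmin_ge; first by rewrite /M E; lia.
    by rewrite E.
  lia.
Qed.

Lemma tri_join G1 G2 : tri G1 -> tri G2 -> tri (gjoin G1 G2).
Proof.
move=> T1 T2 i j k; rewrite /gjoin.
move: (T1 i j k) (T2 i j k).
case: (G1 i j) => [a|]; case: (G1 i k) => [b|]; case: (G1 k j) => [c|];
case: (G2 i j) => [d|]; case: (G2 i k) => [e|]; case: (G2 k j) => [f|] //=; lia.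
Qed.

Lemma le_join1 G1 G2 z i j : le_w (Fin z) (G1 i j) -> le_w (Fin z) (gjoin G1 G2 i j).
Proof. rewrite /gjoin; case: (G1 i j) => [a|]; case: (G2 i j) => [b|] //=; lia. Qed.

Lemma le_join2 G1 G2 z i j : le_w (Fin z) (G2 i j) -> le_w (Fin z) (gjoin G1 G2 i j).
Proof. rewrite /gjoin; case: (G1 i j) => [a|]; case: (G2 i j) => [b|] //=; lia. Qed.

Definition cstr_of (u v : node n) (e : ext) : seq (bd_cstr n) :=
  match e with
  | PInf => [::]
  | Fin b =>
    match unlift ord0 u, unlift ord0 v with
    | Some u', Some v' => [:: CDiff u' v' b]
    | Some u', None => [:: CUp u' b]
    | None, Some v' => [:: CLo v' b]
    | None, None => [::]
    end
  end.

Lemma sat_all_cat (s1 s2 : seq (bd_cstr n)) x :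
  sat_all (s1 ++ s2) x <-> sat_all s1 x /\ sat_all s2 x.
Proof. elim: s1 => [|c s IH] /=; first by tauto. rewrite IH; tauto. Qed.

Lemma sat_all_flatten (T : eqType) (s : seq T) (f : T -> seq (bd_cstr n)) x :
  sat_all (flatten [seq f a | a <- s]) x <-> forall a, a \in s -> sat_all (f a) x.
Proof.
elim: s => [|a s IH] /=; first by split.
rewrite sat_all_cat IH; split.
- by move=> [H1 H2] b; rewrite inE => /orP [/eqP ->|]; auto.
- move=> H; split; first by apply: H; rewrite inE eqxx.
  by move=> b Hb; apply: H; rewrite inE Hb orbT.
Qed.

Lemma sat_cstr_of u v e x : (u = ord0 -> v = ord0 -> le_w (Fin 0) e) ->
  (sat_all (cstr_of u v e) x <-> le_w (Fin (xval x u - xval x v)) e).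
Proof.
rewrite /cstr_of /xval; case: e => [b|] //= H.
case: (unliftP ord0 u) => [u'|] Eu; case: (unliftP ord0 v) => [v'|] Ev /=.
- by split => [[]|].
- by rewrite subr0; split => [[]|].
- by rewrite sub0r; split => [[]|].
- by rewrite subrr; split => // _; apply: H.
Qed.

Lemma gamma_BD C : (forall i, C i i = Fin 0) -> is_BD (gamma C).
Proof.
move=> D.
exists (flatten [seq flatten [seq cstr_of u v (C u v) | v <- enum 'I_n.+1]
                 | u <- enum 'I_n.+1]) => x.
rewrite sat_all_flatten; split.
- move=> H u _; rewrite sat_all_flatten => v _.
  by rewrite sat_cstr_of // => -> ->; rewrite D.
- move=> H u v; have := H u; rewrite mem_enum => /(_ isT).
  rewrite sat_all_flatten => /(_ v); rewrite mem_enum => /(_ isT).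
  by rewrite sat_cstr_of // => -> ->; rewrite D.
Qed.

Definition src (c : bd_cstr n) : node n :=
  match c with CUp i _ => lift ord0 i | CLo _ _ => ord0 | CDiff i _ _ => lift ord0 i end.
Definition dst (c : bd_cstr n) : node n :=
  match c with CUp _ _ => ord0 | CLo i _ => lift ord0 i | CDiff _ j _ => lift ord0 j end.
Definition bnd (c : bd_cstr n) : int :=
  match c with CUp _ b => b | CLo _ b => b | CDiff _ _ b => b end.

Lemma sat_cstr_xval c y : sat_cstr c y <-> xval y (src c) - xval y (dst c) <= bnd c.
Proof.
have E1 : forall i, xval y (lift ord0 i) = y i by move=> i; rewrite /xval liftK.
have E0 : xval y ord0 = 0 by rewrite /xval unlift_none.
by case: c => [i b|i b|i j b] /=; rewrite ?E1 ?E0 ?subr0 ?sub0r.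
Qed.

Lemma J_gamma G1 G2 : closed_graph G1 -> closed_graph G2 ->
  (exists x, gamma G1 x) -> (exists x, gamma G2 x) ->
  forall x, bd_uplus (gamma G1) (gamma G2) x <-> gamma (gjoin G1 G2) x.
Proof.
move=> [_ D1 T1] [_ D2 T2] ne1 ne2 x; split.
- move=> H; apply: H.
    by apply: gamma_BD => i; rewrite /gjoin D1 D2 /= maxxx.
  by move=> y [H|H] i j; [apply: le_join1 | apply: le_join2].
- move=> Hx B [cs Hcs] HU; apply/Hcs.
  have HU' : forall y, gamma G1 y \/ gamma G2 y -> sat_all cs y.
    by move=> y Hy; apply/Hcs; apply: HU.
  elim: cs {Hcs} HU' => [|c cs IH] //= HU'; split; last first.
    by apply: IH => y Hy; case: (HU' y Hy).
  apply/sat_cstr_xval.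
  have t1 := tight (s:=src c) (t:=dst c) (b:=bnd c) T1 D1 ne1
     (fun y Hy => proj1 (sat_cstr_xval c y) (proj1 (HU' y (or_introl Hy)))).
  have t2 := tight (s:=src c) (t:=dst c) (b:=bnd c) T2 D2 ne2
     (fun y Hy => proj1 (sat_cstr_xval c y) (proj1 (HU' y (or_intror Hy)))).
  move: t1 t2 (Hx (src c) (dst c)); rewrite /gjoin.
  case: (G1 _ _) => [a|] //; case: (G2 _ _) => [b|] //= ; lia.
Qed.

Lemma viol R G x : subgraph R G -> is_closure R G -> ~ gamma G x ->
  exists i j c, [/\ R i j = Fin c, G i j = Fin c & c < xval x i - xval x j].
Proof.
move=> S Cl Hn; apply: NNPP => Hno; apply: Hn => i j.
have [_ H2] := Cl i j.
pose Gx : graph n := fun u v => Fin (xval x u - xval x v).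
apply: (H2 Gx).
- split.
  + move=> x0 s _ Hl.
    have P : forall y s, pathw Gx y s = Fin (xval x y - xval x (last y s)).
      move=> y s0; elim: s0 y => [|z s0 IH] y /=; first by rewrite subrr.
      by rewrite IH /=; congr Fin; lia.
    by rewrite P Hl /= subrr ltxx.
  + by move=> u; rewrite /Gx subrr.
  + by move=> u v k; rewrite /Gx /=; lia.
- move=> u v; rewrite /Gx; case E: (R u v) => [c|] //=.
  case: leP => // Hlt; exfalso; apply: Hno; exists u, v, c; split => //.
  by rewrite -E; symmetry; apply: S; rewrite E.
Qed.

End Aux.

Theorem theorem7 (n : nat) (G1 G2 R1 R2 : graph n) :
  closed_graph G1 -> closed_graph G2 ->
  (exists x, gamma G1 x) -> (exists x, gamma G2 x) ->
  subgraph R1 G1 -> is_closure R1 G1 ->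
  subgraph R2 G2 -> is_closure R2 G2 ->
  let w := gjoin G1 G2 in
  (~ set_eq (bd_uplus (gamma G1) (gamma G2)) (fun x => gamma G1 x \/ gamma G2 x))
  <->
  (exists i j k l : node n,
     [/\ is_arc R1 i j, is_arc R2 k l,
         lt_w (G1 i j) (G2 i j), lt_w (G2 k l) (G1 k l) &
         le_w (add_w (add_w (G1 i j) (G2 k l)) (Fin 2)) (add_w (w i l) (w k j))]).
Proof.
move=> C1 C2 ne1 ne2 S1 Cl1 S2 Cl2 w.
have JE := J_gamma C1 C2 ne1 ne2.
have [_ D1 T1] := C1; have [_ D2 T2] := C2.
split.
- move=> Hne; apply: NNPP => Hno; apply: Hne => x; rewrite JE.
  split; last by case=> H i j; [apply: le_join1 | apply: le_join2].
  move=> Hx; apply: NNPP => Hnu.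
  have [i [j [a [E1 F1 L1]]]] := viol S1 Cl1 (fun H => Hnu (or_introl H)).
  have [k [l [b [E2 F2 L2]]]] := viol S2 Cl2 (fun H => Hnu (or_intror H)).
  apply: Hno; exists i, j, k, l; split.
  + by rewrite /is_arc E1.
  + by rewrite /is_arc E2.
  + move: (Hx i j); rewrite /gjoin F1; case: (G2 i j) => [a2|] //=; lia.
  + move: (Hx k l); rewrite /gjoin F2; case: (G1 k l) => [b1|] //=; lia.
  + rewrite F1 F2 /w; move: (Hx i l) (Hx k j).
    case: (gjoin G1 G2 i l) => [c1|]; case: (gjoin G1 G2 k j) => [c2|] //=; lia.
- move=> [i [j [k [l [A1 A2 L1 L2 Le]]]]] Heq.
  case E1: (G1 i j) L1 Le => [a|] //= L1.
  case E2: (G2 k l) L2 => [b|] //= L2 Le.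
  have Tw : tri w := tri_join T1 T2.
  have Dw : forall u, w u u = Fin 0 by move=> u; rewrite /w /gjoin D1 D2 /= maxxx.
  have [p Hp] := ne1.
  have Hpw : gamma w p by move=> u v; apply: le_join1.
  have SP : solC w (xval p) by rewrite -gamma_solC.
  have [d Hd1 Hd2] : exists2 d : int, (forall c1, w i l = Fin c1 -> a + 1 <= c1 + d)
                        & (forall c2, w k j = Fin c2 -> b + 1 + d <= c2).
    move: Le; case: (w i l) => [c1|]; case: (w k j) => [c2|] /= Le.
    * by exists (a + 1 - c1) => c E; first [discriminate | case: E => <-; lia].
    * by exists (a + 1 - c1) => c E; first [discriminate | case: E => <-; lia].
    * by exists (c2 - b - 1) => c E; first [discriminate | case: E => <-; lia].
    * by exists 0 => c E; discriminate.
  have [M HM1 HM2] : exists2 M : int, a + 1 <= xval p i + M & b + 1 + d <= xval p k + M.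
    case: (leP (a + 1 - xval p i) (b + 1 + d - xval p k)) => H;
      [exists (b + 1 + d - xval p k) | exists (a + 1 - xval p i)]; lia.
  have Sh := @cone_sol n w _ j 0 Tw (@cone_sol n w _ l d Tw (solC_add M SP)).
  have [y [Hy Ey]] := solC_point Sh.
  set h1 := fun v => cmin (add_w (w v l) (Fin d)) (xval p v + M).
  set h := fun v => cmin (add_w (w v j) (Fin 0)) (h1 v).
  have hj : h j <= 0 by apply: cmin_le_a; rewrite Dw /= addr0.
  have hl : h l <= d.
    apply: le_trans (cmin_le_z _ _) _; apply: cmin_le_a; by rewrite Dw /= add0r.
  have hi : a + 1 <= h i.
    apply: cmin_ge.
      apply: cmin_ge => // c; case Eil: (w i l) => [c1|] //= [<-].
      by have := Hd1 c1 Eil; lia.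
    move=> c; rewrite /w /gjoin E1; move: L1.
    by case: (G2 i j) => [a2|] //= L1 [<-]; lia.
  have hk : b + 1 + d <= h k.
    apply: cmin_ge.
      apply: cmin_ge => // c; rewrite /w /gjoin E2; move: L2.
      by case: (G1 k l) => [b1|] //= L2 [<-]; lia.
    move=> c; case Ekj: (w k j) => [c2|] //= [<-].
    by have := Hd2 c2 Ekj; lia.
  have Hyw : bd_uplus (gamma G1) (gamma G2) y by apply/JE.
  case: (proj1 (Heq y) Hyw) => H.
  + by move: (H i j) hi hj; rewrite E1 /= !Ey /h /h1; lia.
  + by move: (H k l) hk hl; rewrite E2 /= !Ey /h /h1; lia.
Qed.
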